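(* Let $n,k$ be integers with $1 \leq k \leq n$ and let $q$ be a prime power with $q > \binom{n-1}{k-1}$. Then there exists an $[n,k]_q$ MDS code that has a $k \times n$ generator matrix $\mathbf{G}$ over $\mathbb{F}_q$ satisfying both of the following: (C1) (sparsest) each row of $\mathbf{G}$ has Hamming weight $n-k+1$; (C2) (balanced) the Hamming weights of the columns of $\mathbf{G}$ differ from each other by at most one.
   Context: $\mathbb{F}_q$ is the finite field with $q$ elements. The Hamming weight of a vector is the number of its nonzero coordinates; rows and columns of a matrix are regarded as vectors. An $[n,k]_q$ MDS code is a linear code of length $n$ and dimension $k$ over $\mathbb{F}_q$ with minimum distance $n-k+1$. *)

(* Defs.v *)
From HB Require Import structures.
From mathcomp Require Import all_boot all_order all_algebra all_field.
Set Implicit Arguments. Unset Strict Implicit. Unset Printing Implicit Defensive.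
Import GRing.Theory.
Local Open Scope ring_scope.

Definition hwt (F : fieldType) (n : nat) (v : 'rV[F]_n) : nat :=
  #|[set i : 'I_n | v 0 i != 0]|.

Definition row_wt (F : fieldType) (m n : nat) (G : 'M[F]_(m, n)) (i : 'I_m) : nat :=
  hwt (row i G).
Definition col_wt (F : fieldType) (m n : nat) (G : 'M[F]_(m, n)) (j : 'I_n) : nat :=
  hwt (col j G)^T.

Definition min_dist_is (F : fieldType) (m n : nat) (G : 'M[F]_(m, n)) (d : nat) : Prop :=
  (exists2 c : 'rV[F]_n, (c <= G)%MS & (c != 0) && (hwt c == d)) /\
  (forall c : 'rV[F]_n, (c <= G)%MS -> c != 0 -> (d <= hwt c)%N).

Definition MDS_generator (F : fieldType) (k n : nat) (G : 'M[F]_(k, n)) : Prop :=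
  \rank G = k /\ min_dist_is G (n - k + 1).

(* Main.v *)
Require Import Defs.
From HB Require Import structures.
From mathcomp Require Import all_boot all_order all_algebra all_field.
From mathcomp Require Import zify fingroup perm.
Set Implicit Arguments. Unset Strict Implicit. Unset Printing Implicit Defensive.
Import GRing.Theory.

Section Count.
Variables (n k : nat) (mark : nat -> bool).
Hypothesis n_gt0 : 0 < n.
Hypothesis mark_per : forall x, mark (x + n) = mark x.
Definition Nc x := \sum_(0 <= y < x) mark y.
Hypothesis Nc_n : Nc n = k.

Lemma Nc0 : Nc 0 = 0. Proof. by rewrite /Nc big_geq. Qed.
Lemma NcS x : Nc x.+1 = Nc x + mark x.
Proof. by rewrite /Nc big_nat_recr. Qed.

Lemma Nc_mono x d : Nc x <= Nc (x + d).
Proof. elim: d => [|d IH]; first by rewrite addn0. by rewrite addnS NcS; lia. Qed.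

Lemma Nc_lipd x d : Nc (x + d) <= Nc x + d.
Proof.
elim: d => [|d IH]; first by rewrite !addn0.
by rewrite addnS NcS; case: (mark _) => /=; lia.
Qed.

Lemma Nc_lip x y : Nc y <= Nc x + (y - x).
Proof.
case: (leqP x y) => hxy.
  by rewrite -{1}(subnKC hxy) Nc_lipd.
have := Nc_mono y (x - y); rewrite subnKC ?(ltnW hxy) //; lia.
Qed.

Lemma Nc_per x : Nc (x + n) = Nc x + k.
Proof.
elim: x => [|x IH]; first by rewrite add0n Nc0 Nc_n.
by rewrite addSn !NcS IH mark_per; lia.
Qed.

Lemma Nc_mul x m : Nc (x + m * n) = Nc x + m * k.
Proof.
elim: m => [|m IH]; first by rewrite !mul0n !addn0.
by rewrite mulSn addnA (addnC x n) -addnA addnC Nc_per IH mulSn addnA -!addnA (addnC (m * k)).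
Qed.

Lemma Nc_mod x : Nc x = Nc (x %% n) + (x %/ n) * k.
Proof. by rewrite {1}(divn_eq x n) addnC Nc_mul. Qed.

Lemma Nc_ivt u d t : Nc u <= t < Nc (u + d) ->
  exists y, [/\ u <= y < u + d, mark y & Nc y = t].
Proof.
elim: d => [|d IH]; first by rewrite addn0; lia.
rewrite addnS NcS => /andP[h1 h2].
case: (ltnP t (Nc (u + d))) => h3.
  by have [y [hy my ny]] := IH (introT andP (conj h1 h3)); exists y; split=> //; lia.
have hm : mark (u + d) by move: h2; case: (mark _) => //=; lia.
by exists (u + d); split=> //; lia.
Qed.

End Count.

Section Shift.
Variables (n k : nat).
Hypothesis k_gt0 : 0 < k.
Hypothesis kn : k <= n.
Let n_gt0 : 0 < n. Proof. exact: leq_trans k_gt0 kn. Qed.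

Definition st i := i * n %/ k.
Definition Ln := n - k + 1.

Lemma st_step x : st x + 1 <= st x.+1.
Proof.
have -> : st x + 1 = (x * n + k) %/ k.
  by rewrite divnDr // divnn k_gt0.
rewrite /st mulSn addnC.
by apply: leq_div2r; nia.
Qed.

Lemma st_mono i d : st i + d <= st (i + d).
Proof.
elim: d => [|d IH]; first by rewrite !addn0.
rewrite (addnS i d); have := st_step (i + d); lia.
Qed.

Lemma st0 : st 0 = 0. Proof. by rewrite /st mul0n div0n. Qed.
Lemma stk : st k = n. Proof. by rewrite /st mulnC mulnK. Qed.

Lemma st_ge i : i <= st i. Proof. by have := st_mono 0 i; rewrite st0. Qed.
Lemma st_le i : i <= k -> st i + (k - i) <= n.
Proof. by move=> hi; have := st_mono i (k - i); rewrite subnKC // stk. Qed.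
Lemma st_monoij i j : i <= j -> st i + (j - i) <= st j.
Proof. by move=> hij; have := st_mono i (j - i); rewrite subnKC. Qed.

Variable J : {set 'I_n}.
Hypothesis hJ : #|J| = k.

Definition markJ y := (y %% n) \in [seq val c | c <- enum J].

Lemma markJ_per x : markJ (x + n) = markJ x.
Proof. by rewrite /markJ modnDr. Qed.

Lemma NcJ_n : Nc markJ n = k.
Proof.
rewrite /Nc big_mkord -hJ -sum1_card [RHS]big_mkcond /=; apply: eq_bigr => i _.
by rewrite /markJ modn_small // (mem_map val_inj) mem_enum; case: (i \in J).
Qed.

Local Notation N := (Nc markJ).

Ltac sidec := try exact: n_gt0; try exact: NcJ_n; try exact: markJ_per.

Lemma NJlip x y : N y <= N x + (y - x).
Proof. apply: Nc_lip; sidec. Qed.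
Lemma NJper x : N (x + n) = N x + k.
Proof. apply: Nc_per; sidec. Qed.
Lemma NJmod x : N x = N (x %% n) + (x %/ n) * k.
Proof. apply: Nc_mod; sidec. Qed.
Lemma NJivt u d t : N u <= t < N (u + d) ->
  exists y, [/\ u <= y < u + d, markJ y & N y = t].
Proof. apply: Nc_ivt; sidec. Qed.

Lemma pair_ineq i i' : i < k -> i' < k -> N (st i') + i < N (st i + Ln) + i'.
Proof.
move=> hi hi'; rewrite /Ln.
case: (leqP i' i) => hii.
  have h1 := NJlip (st i + (n - k + 1)) (st i' + n).
  rewrite NJper in h1.
  have h2 := st_monoij hii.
  lia.
have h1 := NJlip (st i + (n - k + 1)) (st i').
have h2 := st_le (ltnW hi').
have h3 := st_ge i.
lia.
Qed.

Lemma shift_match : exists sg : 'I_k -> 'I_n,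
  injective sg /\ forall i, sg i \in J /\ (sg i + n - st i) %% n < Ln.
Proof.
pose r := \max_(i < k) (N (st i) - i).
have hr1 i : i < k -> N (st i) <= i + r.
  move=> hi; have := @leq_bigmax _ (fun i : 'I_k => N (st i) - i) (Ordinal hi); rewrite /r /=; lia.
have hr2 i : i < k -> i + r < N (st i + Ln).
  move=> hi; have h0 := pair_ineq hi k_gt0; rewrite st0 Nc0 in h0.
  have : r <= N (st i + Ln) - i - 1.
    apply/bigmax_leqP=> i' _; have := pair_ineq hi (ltn_ord i'); lia.
  lia.
have hy : forall i : 'I_k, exists y, [/\ st i <= y < st i + Ln, markJ y & N y = i + r].
  move=> i; apply: NJivt; rewrite hr1 // hr2 //.
have [y hyP] := fin_all_exists hy.
have ym i : y i %% n < n by rewrite ltn_pmod.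
exists (fun i => Ordinal (ym i)); split.
  move=> i1 i2 /(congr1 val) /= e.
  have hmod i : N (y i) %% k = N (y i %% n) %% k.
    by rewrite {1}NJmod addnC modnMDl.
  have [_ _ e1] := hyP i1; have [_ _ e2] := hyP i2.
  have : (i1 + r == i2 + r %[mod k]) by rewrite -e1 -e2 hmod e hmod.
  by rewrite eqn_modDr !modn_small // => /eqP /val_inj.
move=> i; have [/andP[hy1 hy2] hm _] := hyP i; split.
  move: hm; rewrite /markJ => /mapP [c]; rewrite mem_enum => cJ e.
  by have -> : Ordinal (ym i) = c by apply: val_inj.
rewrite /= -addnBA; last by have := st_le (ltnW (ltn_ord i)); lia.
rewrite modnDml.
have -> : y i + (n - st i) = (y i - st i) + n.
  by have := st_le (ltnW (ltn_ord i)); lia.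
rewrite modnDr modn_small; rewrite /Ln in hy2 *; lia.
Qed.

End Shift.

Lemma card_Kj n k (j : 'I_n) : 0 < k ->
  #|[set J : {set 'I_n} | (#|J| == k) && (j \in J)]| <= 'C(n.-1, k.-1).
Proof.
move=> k0.
rewrite -[n in 'C(n.-1, _)]card_ord -(cardsC1 j) -cards_draws.
set K := [set J : {set 'I_n} | _].
have <- : #|[set J :\ j | J in K]| = #|K|.
  apply: card_in_imset => J1 J2; rewrite /K !inE => /andP [_ j1] /andP [_ j2] e.
  by rewrite -(setD1K j1) -(setD1K j2) e.
apply/subset_leq_card/subsetP=> B; case/imsetP=> J hJK ->; move: hJK; rewrite /K !inE => /andP [/eqP hJ jJ].
apply/andP; split.
  by apply/subsetP=> x; rewrite !inE => /andP [].
by move: (cardsD1 j J); rewrite jJ hJ; lia.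
Qed.

Lemma sum_lt m a : \sum_(d < m) (d < a) = minn a m.
Proof. elim: m => [|m IH]; first by rewrite big_ord0; lia. by rewrite big_ord_recr /= IH; lia. Qed.

Lemma card_lt m a : #|[set d : 'I_m | d < a]| = minn a m.
Proof.
rewrite -sum_lt -sum1_card big_mkcond /=; apply: eq_bigr => i _.
by rewrite inE; case: (i < a).
Qed.

Lemma sum_3 m A B D : A <= B <= D ->
  \sum_(i < m) ((A <= i < B) || (D <= i)) = minn B m - minn A m + (m - minn D m).
Proof.
move=> hABD; elim: m => [|m IH]; first by rewrite big_ord0; lia.
rewrite big_ord_recr /= IH.
by case: (leqP A m) => h1; case: (ltnP m B) => h2; case: (leqP D m) => h3 /=; lia.
Qed.

Section Pattern.
Variables (n k : nat).
Hypothesis k_gt0 : 0 < k.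
Hypothesis kn : k <= n.
Let n_gt0 : 0 < n. Proof. exact: leq_trans k_gt0 kn. Qed.

Local Notation s := (st n k).
Local Notation L := (Ln n k).

Definition inP i c := (c + n - s i) %% n < L.

Lemma st_lt i : i < k -> s i < n.
Proof. move=> hi; have := st_le k_gt0 kn (ltnW hi); lia. Qed.

Lemma row_count (i : nat) : i < k -> #|[set c : 'I_n | inP i c]| = L.
Proof.
move=> hi; have hs := st_lt hi.
have fm (c : 'I_n) : (c + n - s i) %% n < n by rewrite ltn_pmod.
pose f (c : 'I_n) := Ordinal (fm c).
have finj : injective f.
  move=> c1 c2 /(congr1 val) /= /eqP.
  rewrite -!addnBA; try lia. rewrite eqn_modDr !modn_small // => /eqP; exact: val_inj.
have -> : [set c : 'I_n | inP i c] = f @^-1: [set d : 'I_n | d < L].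
  by apply/setP=> c; rewrite !inE.
by rewrite card_preimset // card_lt /Ln; lia.
Qed.

Definition Cf a := (a * k + n.-1) %/ n.

Lemma st_geP a i : (a <= s i) = (Cf a <= i).
Proof.
rewrite /st leq_divRL // /Cf -[(_ %/ n <= i)]ltnS ltn_divLR // mulSn.
apply/idP/idP; lia.
Qed.

Lemma st_ltP b i : (s i < b) = (i < Cf b).
Proof. by rewrite ltnNge st_geP -ltnNge. Qed.

Lemma Cf_mono a b : a <= b -> Cf a <= Cf b.
Proof. move=> h; apply: leq_div2r; rewrite leq_add2r; exact: leq_mul. Qed.

Lemma Cf_n : Cf n = k.
Proof.
rewrite /Cf mulnC divnMDl // divn_small ?addn0 //; lia.
Qed.

Lemma Cf_addn x : Cf (x + n) = Cf x + k.
Proof.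
rewrite /Cf; have -> : (x + n) * k + n.-1 = k * n + (x * k + n.-1) by rewrite mulnDl (mulnC n k); lia.
by rewrite divnMDl // addnC.
Qed.

Lemma Cf_diff x : (L * k) %/ n <= Cf (x + L) - Cf x <= (L * k) %/ n + 1.
Proof.
rewrite /Cf; have -> : (x + L) * k + n.-1 = (x * k + n.-1) + L * k by rewrite mulnDl; lia.
rewrite divnD //; case: (n <= _); move: ((x * k + n.-1) %/ n) ((L * k) %/ n) => A q /=; lia.
Qed.

Definition colW c := #|[set i : 'I_k | inP i c]|.

Lemma colW_val (c : 'I_n) : exists y, colW c = Cf (y + L) - Cf y.
Proof.
have hc := ltn_ord c.
have e : forall i : 'I_k, inP i c =
  ((Cf (c.+1 - L) <= i < Cf c.+1) || (Cf ((c + n).+1 - L) <= i)).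
  move=> i; rewrite /inP -!st_geP -st_ltP.
  have hs := st_lt (ltn_ord i).
  case: (leqP (s i) c) => h.
    have -> : c + n - s i = (c - s i) + n by lia.
    rewrite modnDr modn_small; last by rewrite /Ln; lia.
    rewrite /Ln; apply/idP/idP; lia.
  rewrite modn_small; last by lia.
  rewrite /Ln; apply/idP/idP; lia.
have hL : 0 < L <= n by rewrite /Ln; lia.
rewrite /colW.
have -> : #|[set i : 'I_k | inP i c]| = \sum_(i < k) ((Cf (c.+1 - L) <= i < Cf c.+1) || (Cf ((c + n).+1 - L) <= i)).
  rewrite -sum1_card big_mkcond /=; apply: eq_bigr => i _; rewrite inE e; by case: (_ || _).
have m1 := @Cf_mono (c.+1 - L) c.+1 (leq_subr _ _).
have m2 := @Cf_mono c.+1 ((c + n).+1 - L) ltac:(lia).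
rewrite sum_3; last by rewrite m1 m2.
have hB : Cf c.+1 <= k by have := @Cf_mono c.+1 n hc; rewrite Cf_n.
case: (leqP L c.+1) => hcL.
  have hD : k <= Cf ((c + n).+1 - L) by have := @Cf_mono n ((c + n).+1 - L) ltac:(lia); rewrite Cf_n.
  exists (c.+1 - L); rewrite subnK //.
  have hA : Cf (c.+1 - L) <= k by lia.
  lia.
have hD : Cf ((c + n).+1 - L) <= k by have := @Cf_mono ((c + n).+1 - L) n ltac:(lia); rewrite Cf_n.
have hA : Cf (c.+1 - L) = 0.
  have -> : c.+1 - L = 0 by lia.
  by rewrite /Cf mul0n add0n divn_small //; lia.
exists ((c + n).+1 - L).
have -> : (c + n).+1 - L + L = c.+1 + n by lia.
rewrite Cf_addn hA; lia.
Qed.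

Lemma col_balance (c1 c2 : 'I_n) : colW c1 <= colW c2 + 1.
Proof.
have [y1 ->] := colW_val c1; have [y2 ->] := colW_val c2.
have := Cf_diff y1; have := Cf_diff y2; lia.
Qed.

End Pattern.

Local Open Scope ring_scope.


Lemma det_affine (R : fieldType) k (A : R -> 'M[R]_k) (i t : 'I_k) a1 a2 x :
  (forall a b i' t', (i', t') != (i, t) -> A a i' t' = A b i' t') ->
  (forall a, A a i t = a) -> a1 != a2 ->
  \det (A a1) = 0 -> \det (A a2) = 0 -> \det (A x) = 0.
Proof.
move=> hA hAi ne12 d1 d2.
have cofE a t' : cofactor (A a) i t' = cofactor (A x) i t'.
  rewrite /cofactor; congr (_ * _); congr (\det _); apply/matrixP=> u v.
  rewrite !mxE; apply: hA; apply/negP=> /eqP [] h _; by move: (neq_lift i u); rewrite h eqxx.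
have E a : \det (A a) = a * cofactor (A x) i t +
    \sum_(t' | t' != t) A x i t' * cofactor (A x) i t'.
  rewrite (expand_det_row _ i) (bigD1 t) //= hAi cofE; congr (_ + _).
  apply: eq_bigr => t' ht'; rewrite cofE; congr (_ * _); apply: hA.
  by apply/negP => /eqP [] ht; rewrite ht eqxx in ht'.
have hc : cofactor (A x) i t = 0.
  set c := cofactor (A x) i t; set B := \sum_(t' | t' != t) A x i t' * cofactor (A x) i t'.
  have : (a1 - a2) * c = (a1 * c + B) - (a2 * c + B).
    by rewrite mulrBl opprD addrACA subrr addr0.
  rewrite -!E d1 d2 subrr => /eqP; rewrite mulf_eq0 subr_eq0 (negbTE ne12) /=.
  by move/eqP.
by move: d1; rewrite !E hc !mulr0 !add0r.
Qed.

Section Greedy.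
Variables (F : finFieldType) (k n : nat) (j0 : 'I_n).

Definition subJ (J : {set 'I_n}) (M : 'M[F]_(k, n)) : 'M[F]_k :=
  \matrix_(i, t) M i (nth j0 (enum J) t).

Definition upd (M : 'M[F]_(k, n)) (p : 'I_k * 'I_n) a : 'M[F]_(k, n) :=
  \matrix_(i, j) if (i, j) == p then a else M i j.

Lemma nth_enum_inj (J : {set 'I_n}) : #|J| = k ->
  injective (fun t : 'I_k => nth j0 (enum J) t).
Proof.
move=> hJ t1 t2 /eqP; rewrite nth_uniq ?enum_uniq -?cardE ?hJ //.
by move/eqP/val_inj.
Qed.

Lemma nth_enum_mem (J : {set 'I_n}) (t : 'I_k) : #|J| = k -> nth j0 (enum J) t \in J.
Proof. by move=> hJ; rewrite -mem_enum mem_nth // -cardE hJ. Qed.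

Lemma enum_index (J : {set 'I_n}) j : #|J| = k -> j \in J ->
  exists t : 'I_k, nth j0 (enum J) t = j.
Proof.
move=> hJ jJ; have hi : (index j (enum J) < k)%N by rewrite -hJ cardE index_mem mem_enum.
by exists (Ordinal hi); rewrite /= nth_index // mem_enum.
Qed.

Definition agree (U : {set 'I_k * 'I_n}) (M1 M2 : 'M[F]_(k, n)) :=
  forall p, p \notin U -> M1 p.1 p.2 = M2 p.1 p.2.

Hypothesis hcount : forall j : 'I_n,
  (#|[set J : {set 'I_n} | (#|J| == k) && (j \in J)]| < #|F|)%N.

Lemma greedy_step (U : {set 'I_k * 'I_n}) (M : 'M[F]_(k, n)) p :
  p \in U ->
  (forall J : {set 'I_n}, #|J| = k -> exists M', agree U M' M /\ \det (subJ J M') != 0) ->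
  exists a, forall J : {set 'I_n}, #|J| = k ->
    exists M', agree (U :\ p) M' (upd M p a) /\ \det (subJ J M') != 0.
Proof.
move=> pU hyp.
pose good a (J : {set 'I_n}) := [exists M' : 'M[F]_(k, n),
   [forall q, (q \notin U :\ p) ==> (M' q.1 q.2 == upd M p a q.1 q.2)]
   && (\det (subJ J M') != 0)].
have goodP a (J : {set 'I_n}) : good a J -> exists M', agree (U :\ p) M' (upd M p a) /\ \det (subJ J M') != 0.
  case/existsP=> M' /andP[/forallP hq hd]; exists M'; split=> // q hqU.
  by apply/eqP; move/implyP: (hq q); apply.
have wit (J : {set 'I_n}) a : #|J| = k -> exists M0, agree U M0 M /\ \det (subJ J M0) != 0 /\
    agree (U :\ p) (upd M0 p a) (upd M p a).
  move=> hJ; have [M0 [hag hd]] := hyp J hJ; exists M0; split=> //; split=> //.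
  move=> q hq; rewrite !mxE -surjective_pairing; case: eqP => // /eqP qp.
  by apply: hag; apply: contra hq => qU; rewrite !inE qp.
have goodI (J : {set 'I_n}) a M0 : agree (U :\ p) (upd M0 p a) (upd M p a) ->
   \det (subJ J (upd M0 p a)) != 0 -> good a J.
  move=> hag hd; apply/existsP; exists (upd M0 p a); rewrite hd andbT.
  by apply/forallP=> q; apply/implyP=> hq; rewrite hag.
case: (boolP [exists a, [forall J : {set 'I_n}, (#|J| == k) ==> good a J]]).
  case/existsP=> a /forallP ha; exists a => J hJ; apply: goodP.
  by move/implyP: (ha J); apply; rewrite hJ.
rewrite negb_exists => /forallP hbad; exfalso.
have hbad' a : exists J : {set 'I_n}, (#|J| == k) && ~~ good a J.
  move: (hbad a); rewrite negb_forall => /existsP [J hJ].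
  by exists J; rewrite negb_imply in hJ.
have [f hf] := fin_all_exists hbad'.
have fmem a : f a \in [set J : {set 'I_n} | (#|J| == k) && (p.2 \in J)].
  rewrite inE; have /andP[/eqP hJ hng] := hf a; rewrite hJ eqxx /=.
  apply: contraR hng => hnp; have [M0 [_ [hd hag]]] := wit (f a) a hJ.
  apply: (goodI _ _ M0 hag); suff -> : subJ (f a) (upd M0 p a) = subJ (f a) M0 by [].
  apply/matrixP=> i t; rewrite !mxE; case: eqP => // e.
  by move: hnp; rewrite -e /= nth_enum_mem.
have : ~~ injectiveb f.
  apply/negP=> /injectiveP finj; move: (hcount p.2); rewrite ltnNge; case/negP.
  rewrite -(card_imset _ finj); apply/subset_leq_card/subsetP=> J /imsetP[a _ ->].
  exact: fmem.
case/injectivePn => a1 [a2 ne12 feq].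
have /andP[/eqP hJ hng1] := hf a1; have /andP[_ hng2] := hf a2.
move: (fmem a1); rewrite inE => /andP[_ hpJ].
rewrite -feq in hng2.
have [M0 [hag0 hd0]] := hyp (f a1) hJ.
have [t ht] := enum_index hJ hpJ.
have bad a : ~~ good a (f a1) -> \det (subJ (f a1) (upd M0 p a)) = 0.
  move=> hng; apply/eqP; apply: contraNT hng => hd.
  apply: (goodI _ _ M0) => // q hq; rewrite !mxE -surjective_pairing; case: eqP => // /eqP qp.
  by apply: hag0; apply: contra hq => qU; rewrite !inE qp.
have := @det_affine F k (fun a => subJ (f a1) (upd M0 p a)) p.1 t a1 a2 (M0 p.1 p.2).
move=> key; apply: (negP hd0); apply/eqP.
have -> : subJ (f a1) M0 = subJ (f a1) (upd M0 p (M0 p.1 p.2)).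
  apply/matrixP=> i u; rewrite !mxE; case: eqP => // e.
  by rewrite -e.
apply: key; [ | | exact: ne12 | exact: bad | exact: bad].
- move=> a b i' t' hne; rewrite !mxE; case: eqP => // e.
  case/negP: hne; have e1 : i' = p.1 by rewrite -e.
  have e2 : nth j0 (enum (f a1)) t' = nth j0 (enum (f a1)) t by rewrite ht -e.
  by rewrite e1 (nth_enum_inj hJ e2).
- by move=> a; rewrite !mxE ht -surjective_pairing eqxx.
Qed.

Lemma greedy (U : {set 'I_k * 'I_n}) (M : 'M[F]_(k, n)) :
  (forall J : {set 'I_n}, #|J| = k -> exists M', agree U M' M /\ \det (subJ J M') != 0) ->
  exists M', agree U M' M /\ forall J : {set 'I_n}, #|J| = k -> \det (subJ J M') != 0.
Proof.
move Hm : #|U| => m; elim: m U M Hm => [|m IH] U M Hm hyp.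
  exists M; split=> // J hJ; have [M' [hag hd]] := hyp J hJ.
  suff <- : M' = M by [].
  apply/matrixP=> i j; apply: (hag (i, j)).
  by move/eqP: Hm; rewrite cards_eq0 => /eqP ->; rewrite inE.
have [p pU] : exists p, p \in U.
  by apply/set0Pn; rewrite -card_gt0 Hm.
have [a ha] := greedy_step pU hyp.
have Hm' : #|U :\ p| = m by move: Hm; rewrite (cardsD1 p U) pU => [[]].
have [M' [hag hd]] := IH _ _ Hm' ha.
exists M'; split=> // q hq; rewrite hag; last by rewrite !inE negb_and hq orbT.
rewrite mxE -surjective_pairing; case: eqP => // qp.
by move: hq; rewrite qp pU.
Qed.

End Greedy.

Lemma subset_of_card (T : finType) (A : {set T}) m : (m <= #|A|)%N ->
  exists B : {set T}, B \subset A /\ #|B| = m.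
Proof.
move=> hm; exists [set x in take m (enum A)]; split.
  by apply/subsetP=> x; rewrite inE => /mem_take; rewrite mem_enum.
rewrite cardsE; move/card_uniqP: (take_uniq m (enum_uniq (mem A))) => ->.
by rewrite size_takel // -cardE.
Qed.


Theorem mainTheorem1 (F : finFieldType) (n k : nat) :
  (1 <= k)%N -> (k <= n)%N -> ('C(n.-1, k.-1) < #|F|)%N ->
  exists G : 'M[F]_(k, n),
    [/\ MDS_generator G,
        (forall i : 'I_k, row_wt G i = n - k + 1)%N
      & (forall j1 j2 : 'I_n, col_wt G j1 <= col_wt G j2 + 1)%N].
Proof.
move=> hk hkn hq.
have n0 : (0 < n)%N by apply: leq_trans hkn.
pose j0 : 'I_n := Ordinal n0.
have hcount : forall j : 'I_n,
    (#|[set J : {set 'I_n} | (#|J| == k) && (j \in J)]| < #|F|)%N.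
  by move=> j; apply: leq_ltn_trans hq; apply: card_Kj.
pose P := [set p : 'I_k * 'I_n | inP n k p.1 p.2].
have init : forall J : {set 'I_n}, #|J| = k ->
    exists M' : 'M[F]_(k, n), agree P M' 0 /\ \det (subJ j0 J M') != 0.
  move=> J hJ; have [sg [sginj hsg]] := shift_match hk hkn hJ.
  exists (\matrix_(i, j) (j == sg i)%:R); split.
    move=> p; rewrite inE !mxE; case: eqP => // ->.
    by have [_ h] := hsg p.1; rewrite /inP h.
  have ht : forall i, exists t : 'I_k, nth j0 (enum J) t = sg i.
    by move=> i; apply: enum_index => //; case: (hsg i).
  have [tau htau] := fin_all_exists ht.
  have tauinj : injective tau.
    by move=> i1 i2 e; apply: sginj; rewrite -htau e htau.
  have -> : subJ j0 J (\matrix_(i, j) (j == sg i)%:R : 'M[F]_(k, n)) = perm_mx (perm tauinj).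
    rewrite perm_mxEsub; apply/matrixP=> i t; rewrite !mxE permE.
    by rewrite -htau (inj_eq (nth_enum_inj (j0:=j0) hJ)) eq_sym.
  by rewrite det_perm signr_eq0.
have [G [hG0 hGdet]] := greedy hcount init.
have zeros : forall x : 'rV[F]_k, (k <= #|[set j : 'I_n | (x *m G) 0%R j == 0%R]|)%N -> x = 0.
  move=> x /subset_of_card [J [hJZ hJ]].
  have hu : subJ j0 J G \in unitmx by rewrite unitmxE unitfE hGdet.
  have hx0 : x *m subJ j0 J G = 0.
    apply/matrixP=> i t; rewrite (ord1 i) [RHS]mxE mxE.
    have := subsetP hJZ _ (nth_enum_mem j0 t hJ); rewrite inE mxE => /eqP h.
    by apply: etrans h; apply: eq_bigr => l _; rewrite !mxE.
  by rewrite -(mulmxK hu x) hx0 mul0mx.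
have lower : forall x : 'rV[F]_k, x *m G != 0 -> (n - k + 1 <= hwt (x *m G))%N.
  move=> x hx; have hz : (#|[set j : 'I_n | (x *m G) 0%R j == 0%R]| < k)%N.
    rewrite ltnNge; apply: contra hx => /zeros ->; by rewrite mul0mx.
  have : (hwt (x *m G) + #|[set j : 'I_n | (x *m G) 0%R j == 0%R]| = n)%N.
    transitivity #|'I_n|; last by rewrite card_ord.
    rewrite /hwt -(cardsC [set j : 'I_n | (x *m G) 0%R j != 0%R]); congr (_ + _)%N.
    by apply: eq_card => j; rewrite !inE negbK.
  lia.
have rowsupp : forall (i : 'I_k) (j : 'I_n), G i j != 0 -> inP n k i j.
  move=> i j; apply: contraR => h; apply/eqP; rewrite (hG0 (i, j)) ?mxE //.
  by rewrite inE.
have rownz : forall i : 'I_k, row i G != 0.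
  move=> i; apply/eqP => h.
  have : ('e_i : 'rV[F]_k) = 0.
    apply: zeros; rewrite -rowE h.
    have -> : [set j | (0 : 'rV[F]_n) 0 j == 0] = setT by apply/setP=> j; rewrite !inE mxE eqxx.
    by rewrite cardsT card_ord.
  move/matrixP => /(_ 0 i); rewrite !mxE !eqxx /=; apply/eqP; exact: oner_neq0.
have rowwt : forall i : 'I_k, hwt (row i G) = (n - k + 1)%N.
  move=> i; apply/eqP; rewrite eqn_leq; apply/andP; split.
    rewrite (_ : (n - k + 1)%N = Ln n k) // -(row_count hk hkn (ltn_ord i)) /hwt.
    apply: subset_leq_card.
    by apply/subsetP=> j; rewrite !inE mxE; apply: rowsupp.
  by rewrite rowE; apply: lower; rewrite -rowE.
have rowset : forall (i : 'I_k) (j : 'I_n), (G i j != 0) = inP n k i j.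
  move=> i j; have : [set j : 'I_n | row i G 0%R j != 0] == [set c : 'I_n | inP n k i c].
    rewrite eqEcard (row_count hk hkn (ltn_ord i)); apply/andP; split.
      by apply/subsetP=> c; rewrite !inE mxE; apply: rowsupp.
    by move: (rowwt i); rewrite /hwt /Ln => ->.
  by move/eqP/setP/(_ j); rewrite !inE mxE.
exists G; split.
- split.
    apply/eqP; rewrite eqn_leq rank_leq_row /=.
    have : kermx G = 0.
      apply/row_matrixP=> i; rewrite row0; apply: zeros.
      rewrite -row_mul mulmx_ker.
      have -> : [set j | (row i (0 : 'M[F]_(k, n))) 0 j == 0] = setT.
        by apply/setP=> j; rewrite !inE !mxE eqxx.
      by rewrite cardsT card_ord.
    move/(congr1 mxrank); rewrite mxrank_ker mxrank0; lia.
  split.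
    have i0 : 'I_k := Ordinal hk.
    exists (row i0 G); first exact: row_sub.
    by rewrite rownz rowwt eqxx.
  move=> c /submxP [x ->] hc; exact: lower.
- by move=> i; rewrite /row_wt rowwt.
- move=> j1 j2.
  have cw : forall j : 'I_n, col_wt G j = colW n k j.
    move=> j; rewrite /col_wt /hwt /colW; apply: eq_card => i.
    by rewrite !inE !mxE rowset.
  by rewrite !cw; apply: col_balance.
Qed.
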